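(* For $d\in[0,D]$ with $Ld<f_BT$, let $X(d)$ be the optimal value of \[ \min_{P,\{\beta_n\}}\ P+\sum_{n=1}^N\beta_n^2(Ph_n+\sigma^2W) \] subject to \[ \frac{P\left(\sum_{n=1}^N\sqrt{h_ng_n}\,\beta_n\right)^2}{\sigma^2W\left(1+\sum_{n=1}^N g_n\beta_n^2\right)}\ge e^{\frac{2d}{W(T-Ld/f_B)}}-1,\qquad P\ge0,\quad \beta_n\ge0\ \ \forall n. \] Then $X(d)$ is a monotonically increasing function of $d$.
   Context: All parameters $N, h_n, g_n, W, \sigma^2, L, D, T, f_B$ are given positive constants, and $n$ ranges over $\{1,\dots,N\}$. *)

(* Defs.v *)
From Stdlib Require Import Reals.
From Coquelicot Require Import Coquelicot.
Open Scope R_scope.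

(* Feasibility of (P, beta) for the problem with distortion parameter d.
   beta is indexed 1..N (values outside are irrelevant). *)
Definition feasible (N : nat) (h g : nat -> R) (W sigma2 L T fB : R)
  (d P : R) (beta : nat -> R) : Prop :=
  0 <= P /\ (forall n, (1 <= n <= N)%nat -> 0 <= beta n) /\
  P * (sum_n_m (fun n => sqrt (h n * g n) * beta n) 1 N) ^ 2
    / (sigma2 * W * (1 + sum_n_m (fun n => g n * beta n ^ 2) 1 N))
  >= exp (2 * d / (W * (T - L * d / fB))) - 1.

Definition objective (N : nat) (h : nat -> R) (W sigma2 : R)
  (P : R) (beta : nat -> R) : R :=
  P + sum_n_m (fun n => beta n ^ 2 * (P * h n + sigma2 * W)) 1 N.

Definition X (N : nat) (h g : nat -> R) (W sigma2 L T fB : R) (d : R) : Rbar :=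
  Glb_Rbar (fun x => exists P beta,
    feasible N h g W sigma2 L T fB d P beta /\ x = objective N h W sigma2 P beta).

(* Main.v *)
Require Import Defs.
From Stdlib Require Import Reals Lra Lia.
From Coquelicot Require Import Coquelicot.
Open Scope R_scope.

Lemma sum_le_loc (a b : nat -> R) (N : nat) :
  (forall k, (1 <= k <= N)%nat -> a k <= b k) ->
  sum_n_m a 1 N <= sum_n_m b 1 N.
Proof.
  induction N as [|N IH]; intros H.
  - rewrite !sum_n_m_zero; try lia. apply Rle_refl.
  - destruct N as [|N].
    + rewrite !sum_n_n. apply H. lia.
    + rewrite !(sum_n_Sm _ 1 (S N)); try lia.
      unfold plus; simpl. apply Rplus_le_compat.
      * apply IH. intros k Hk. apply H. lia.
      * apply H. lia.
Qed.

Lemma sum_pos_loc (a : nat -> R) (N : nat) :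
  (1 <= N)%nat -> (forall k, (1 <= k <= N)%nat -> 0 < a k) ->
  0 < sum_n_m a 1 N.
Proof.
  induction N as [|N IH]; intros HN H.
  - lia.
  - destruct N as [|N].
    + rewrite sum_n_n. apply H. lia.
    + rewrite (sum_n_Sm _ 1 (S N)); try lia.
      unfold plus; simpl. apply Rplus_lt_0_compat.
      * apply IH. lia. intros k Hk. apply H. lia.
      * apply H. lia.
Qed.

Lemma sum_nonneg_loc (a : nat -> R) (N : nat) :
  (forall k, (1 <= k <= N)%nat -> 0 <= a k) ->
  0 <= sum_n_m a 1 N.
Proof.
  intros H. replace 0 with (sum_n_m (fun _ => 0) 1 N).
  - apply sum_le_loc. exact H.
  - rewrite sum_n_m_const. simpl. ring.
Qed.

Lemma sum_lin (a b c : nat -> R) (x y z : R) (N : nat) :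
  sum_n_m (fun k => x * a k + y * b k + z * c k) 1 N =
  x * sum_n_m a 1 N + y * sum_n_m b 1 N + z * sum_n_m c 1 N.
Proof.
  pose proof (sum_n_m_plus (G:=R_AbelianMonoid) (fun k => x * a k + y * b k) (fun k => z * c k) 1 N) as E1.
  pose proof (sum_n_m_plus (G:=R_AbelianMonoid) (fun k => x * a k) (fun k => y * b k) 1 N) as E2.
  pose proof (sum_n_m_mult_l (K:=R_Ring) x a 1 N) as E3.
  pose proof (sum_n_m_mult_l (K:=R_Ring) y b 1 N) as E4.
  pose proof (sum_n_m_mult_l (K:=R_Ring) z c 1 N) as E5.
  unfold plus, mult in *; simpl in *.
  rewrite E1, E2. f_equal; [f_equal|]; [exact E3|exact E4|exact E5].
Qed.

Lemma div_lt (a b c e : R) : 0 < b -> 0 < e -> a * e < c * b -> a / b < c / e.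
Proof.
  intros Hb He H. apply (Rmult_lt_reg_r (b * e)). nra.
  replace (a / b * (b * e)) with (a * e) by (field; lra).
  replace (c / e * (b * e)) with (c * b) by (field; lra). exact H.
Qed.

Theorem lemma9 (N : nat) (h g : nat -> R) (W sigma2 L D T fB : R)
  (HN : (1 <= N)%nat)
  (Hh : forall n, (1 <= n <= N)%nat -> 0 < h n)
  (Hg : forall n, (1 <= n <= N)%nat -> 0 < g n)
  (HW : 0 < W) (Hs : 0 < sigma2) (HL : 0 < L) (HD : 0 < D)
  (HT : 0 < T) (HfB : 0 < fB) :
  forall d1 d2 : R,
    0 <= d1 <= D -> 0 <= d2 <= D ->
    L * d1 < fB * T -> L * d2 < fB * T ->
    d1 < d2 ->
    Rbar_lt (X N h g W sigma2 L T fB d1) (X N h g W sigma2 L T fB d2).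
Proof.
  intros d1 d2 Hd1 Hd2 HL1 HL2 H12.
  set (gam := fun d => exp (2 * d / (W * (T - L * d / fB))) - 1).
  assert (Td1 : 0 < T - L * d1 / fB).
  { assert (L * d1 / fB < T). { apply (Rmult_lt_reg_r fB); auto.
      replace (L * d1 / fB * fB) with (L * d1) by (field; lra). lra. } lra. }
  assert (Td2 : 0 < T - L * d2 / fB).
  { assert (L * d2 / fB < T). { apply (Rmult_lt_reg_r fB); auto.
      replace (L * d2 / fB * fB) with (L * d2) by (field; lra). lra. } lra. }
  assert (Harg : 2 * d1 / (W * (T - L * d1 / fB)) < 2 * d2 / (W * (T - L * d2 / fB))).
  { apply div_lt; try (apply Rmult_lt_0_compat; lra).
    assert (E : forall d, W * (T - L * d / fB) = W * (fB * T - L * d) / fB)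
      by (intro; field; lra).
    rewrite !E.
    replace (2 * d1 * (W * (fB * T - L * d2) / fB)) with ((2 * W / fB) * (d1 * (fB * T - L * d2))) by (field; lra).
    replace (2 * d2 * (W * (fB * T - L * d1) / fB)) with ((2 * W / fB) * (d2 * (fB * T - L * d1))) by (field; lra).
    apply Rmult_lt_compat_l. apply Rdiv_lt_0_compat; lra. assert (0 < (d2 - d1) * (fB * T)) by (apply Rmult_lt_0_compat; nra). nra. }
  assert (Hg1 : 0 <= gam d1).
  { unfold gam. assert (0 <= 2 * d1 / (W * (T - L * d1 / fB))).
    { apply Rmult_le_pos; try lra. left; apply Rinv_0_lt_compat, Rmult_lt_0_compat; lra. }
    destruct H as [H|H].
    - pose proof (exp_increasing _ _ H). rewrite exp_0 in H0. lra.
    - rewrite <- H, exp_0. lra. }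
  assert (Hg12 : gam d1 < gam d2).
  { unfold gam. pose proof (exp_increasing _ _ Harg). lra. }
  assert (Hg2 : 0 < gam d2) by lra.
  set (Hsum := sum_n_m h 1 N).
  assert (HH : 0 < Hsum) by (apply sum_pos_loc; auto).
  set (t := gam d1 / gam d2).
  assert (Ht0 : 0 <= t) by (apply Rmult_le_pos; [lra | left; apply Rinv_0_lt_compat; lra]).
  assert (Ht1 : t < 1).
  { unfold t. apply (Rmult_lt_reg_r (gam d2)); auto.
    replace (gam d1 / gam d2 * gam d2) with (gam d1) by (field; lra). lra. }
  set (delta := (1 - t) * (gam d2 * sigma2 * W / Hsum)).
  assert (Hdelta : 0 < delta).
  { apply Rmult_lt_0_compat. lra. apply Rdiv_lt_0_compat; auto.
    repeat apply Rmult_lt_0_compat; lra. }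
  assert (Hobj0 : forall P beta, feasible N h g W sigma2 L T fB d1 P beta ->
            0 <= objective N h W sigma2 P beta).
  { intros P beta [HP [Hb _]]. unfold objective.
    apply Rplus_le_le_0_compat; auto. apply sum_nonneg_loc. intros k Hk.
    apply Rmult_le_pos. apply pow2_ge_0.
    pose proof (Hh k Hk). apply Rplus_le_le_0_compat. apply Rmult_le_pos; lra.
    apply Rmult_le_pos; lra. }
  assert (HPlow : forall P beta, feasible N h g W sigma2 L T fB d2 P beta ->
            gam d2 * sigma2 * W / Hsum <= P).
  { intros P beta [HP [Hb Hc]].
    set (Ssum := sum_n_m (fun n => sqrt (h n * g n) * beta n) 1 N) in *.
    set (Gsum := sum_n_m (fun n => g n * beta n ^ 2) 1 N) in *.
    assert (HG : 0 <= Gsum).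
    { apply sum_nonneg_loc. intros k Hk. pose proof (Hg k Hk).
      apply Rmult_le_pos. lra. apply pow2_ge_0. }
    assert (HS : 0 <= Ssum).
    { apply sum_nonneg_loc. intros k Hk. apply Rmult_le_pos. apply sqrt_pos. auto. }
    assert (Hquad : forall x, 0 <= Hsum - 2 * x * Ssum + x ^ 2 * Gsum).
    { intro x.
      assert (E : @eq R (sum_n_m (fun n => (sqrt (h n) - x * (sqrt (g n) * beta n)) ^ 2) 1 N)
                  (Hsum - 2 * x * Ssum + x ^ 2 * Gsum)).
      { rewrite (sum_n_m_ext_loc _ (fun n => 1 * h n + (- 2 * x) * (sqrt (h n * g n) * beta n)
                   + (x ^ 2) * (g n * beta n ^ 2))).
        - rewrite sum_lin. unfold Hsum, Ssum, Gsum. ring.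
        - intros k Hk. pose proof (Hh k Hk). pose proof (Hg k Hk).
          enough (Eq : @eq R ((sqrt (h k) - x * (sqrt (g k) * beta k)) ^ 2)
            (1 * h k + (- 2 * x) * (sqrt (h k * g k) * beta k) + (x ^ 2) * (g k * beta k ^ 2))) by exact Eq.
          rewrite sqrt_mult by lra.
          replace ((sqrt (h k) - x * (sqrt (g k) * beta k)) ^ 2) with
            (sqrt (h k) * sqrt (h k) - 2 * x * (sqrt (h k) * sqrt (g k) * beta k)
             + x ^ 2 * (sqrt (g k) * sqrt (g k)) * beta k ^ 2) by ring.
          rewrite !sqrt_sqrt by lra. ring. }
      rewrite <- E. apply sum_nonneg_loc. intros; apply pow2_ge_0. }
    assert (HSH : Ssum ^ 2 <= Hsum * (1 + Gsum)).
    { pose proof (Hquad (Ssum / (1 + Gsum))) as Q.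
      assert (Q' : 0 <= Hsum * (1 + Gsum) ^ 2 - 2 * Ssum ^ 2 * (1 + Gsum) + Ssum ^ 2 * Gsum).
      { replace (Hsum * (1 + Gsum) ^ 2 - 2 * Ssum ^ 2 * (1 + Gsum) + Ssum ^ 2 * Gsum) with
          ((1 + Gsum) ^ 2 * (Hsum - 2 * (Ssum / (1 + Gsum)) * Ssum + (Ssum / (1 + Gsum)) ^ 2 * Gsum)) by (field; lra).
        apply Rmult_le_pos; [apply pow2_ge_0 | exact Q]. }
      nra. }
    assert (Hc' : gam d2 <= P * Ssum ^ 2 / (sigma2 * W * (1 + Gsum))) by (unfold gam; lra).
    assert (Hc2 : P * Ssum ^ 2 / (sigma2 * W * (1 + Gsum)) <= P * Hsum / (sigma2 * W)).
    { replace (P * Ssum ^ 2 / (sigma2 * W * (1 + Gsum))) with ((P / (sigma2 * W)) * (Ssum ^ 2 / (1 + Gsum))) by (field; lra).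
      replace (P * Hsum / (sigma2 * W)) with ((P / (sigma2 * W)) * Hsum) by (field; lra).
      apply Rmult_le_compat_l. apply Rmult_le_pos; [lra | left; apply Rinv_0_lt_compat; nra].
      apply (Rmult_le_reg_r (1 + Gsum)). lra.
      replace (Ssum ^ 2 / (1 + Gsum) * (1 + Gsum)) with (Ssum ^ 2) by (field; lra). lra. }
    apply (Rmult_le_reg_r (Hsum / (sigma2 * W))). apply Rdiv_lt_0_compat; nra.
    replace (gam d2 * sigma2 * W / Hsum * (Hsum / (sigma2 * W))) with (gam d2) by (field; split; nra).
    replace (P * (Hsum / (sigma2 * W))) with (P * Hsum / (sigma2 * W)) by (field; nra). lra. }
  assert (Hscale : forall P beta, feasible N h g W sigma2 L T fB d2 P beta ->
            feasible N h g W sigma2 L T fB d1 (t * P) beta /\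
            objective N h W sigma2 (t * P) beta + delta <= objective N h W sigma2 P beta).
  { intros P beta Hf. pose proof (HPlow P beta Hf) as Hlow.
    destruct Hf as [HP [Hb Hc]]. split; [split; [|split]|].
    - apply Rmult_le_pos; auto.
    - exact Hb.
    - fold (gam d1). fold (gam d2) in Hc.
      replace (t * P * sum_n_m (fun n => sqrt (h n * g n) * beta n) 1 N ^ 2 /
        (sigma2 * W * (1 + sum_n_m (fun n => g n * beta n ^ 2) 1 N))) with
        (t * (P * sum_n_m (fun n => sqrt (h n * g n) * beta n) 1 N ^ 2 /
        (sigma2 * W * (1 + sum_n_m (fun n => g n * beta n ^ 2) 1 N)))) by (unfold Rdiv; ring).
      apply Rle_ge. replace (gam d1) with (t * gam d2) by (unfold t; field; lra).
      apply Rmult_le_compat_l; auto. lra.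
    - unfold objective.
      assert (sum_n_m (fun n => beta n ^ 2 * (t * P * h n + sigma2 * W)) 1 N <=
              sum_n_m (fun n => beta n ^ 2 * (P * h n + sigma2 * W)) 1 N).
      { apply sum_le_loc. intros k Hk. pose proof (Hh k Hk).
        apply Rmult_le_compat_l. apply pow2_ge_0.
        assert (t * P * h k <= P * h k). { apply Rmult_le_compat_r. lra. nra. } lra. }
      unfold delta. nra. }
  set (S1 := sum_n_m (fun n => sqrt (h n * g n) * 1) 1 N).
  set (G1 := sum_n_m (fun n => g n * 1 ^ 2) 1 N).
  assert (HS1 : 0 < S1).
  { apply sum_pos_loc; auto. intros k Hk. pose proof (Hh k Hk). pose proof (Hg k Hk).
    rewrite Rmult_1_r. apply sqrt_lt_R0. nra. }
  assert (HG1 : 0 < G1).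
  { apply sum_pos_loc; auto. intros k Hk. pose proof (Hg k Hk). simpl. lra. }
  set (P1 := gam d1 * (sigma2 * W * (1 + G1)) / S1 ^ 2).
  assert (Hfe : feasible N h g W sigma2 L T fB d1 P1 (fun _ => 1)).
  { split; [|split].
    - unfold P1. apply Rmult_le_pos. apply Rmult_le_pos; auto. left; repeat apply Rmult_lt_0_compat; lra.
      left; apply Rinv_0_lt_compat, pow_lt; lra.
    - intros; lra.
    - fold S1 G1. fold (gam d1). apply Req_ge. unfold P1. field. repeat split; lra. }
  pose proof (Glb_Rbar_correct (fun x => exists P beta,
    feasible N h g W sigma2 L T fB d1 P beta /\ x = objective N h W sigma2 P beta)) as [Hlb1 Hglb1].
  unfold X. fold gam.
  destruct (Glb_Rbar (fun x => exists P beta,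
    feasible N h g W sigma2 L T fB d1 P beta /\ x = objective N h W sigma2 P beta)) as [r| |] eqn:Er.
  - apply Rbar_lt_le_trans with (Finite (r + delta)).
    + simpl. lra.
    + apply Glb_Rbar_correct. intros x [P [beta [Hf Hx]]]. subst x.
      destruct (Hscale P beta Hf) as [Hf' Hle].
      assert (Hr : Rbar_le r (objective N h W sigma2 (t * P) beta)).
      { apply Hlb1. exists (t * P), beta. split; auto. }
      simpl in Hr. simpl. lra.
  - exfalso. specialize (Hlb1 (objective N h W sigma2 P1 (fun _ => 1))).
    apply Hlb1. exists P1, (fun _ => 1). split; auto.
  - exfalso. assert (Rbar_le 0 m_infty). { apply Hglb1. intros x [P [beta [Hf Hx]]]. subst x.
      simpl. exact (Hobj0 P beta Hf). }
    simpl in H. exact H.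
Qed.
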